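(* Let $J=\{q_1,\dots,q_n\}$ be a finite set of odd primes with $3\notin J$. For each $i$ fix $m_i\in\mathbb{N}$ and $e_i\in\{0,1\}$. Then at most $$\sum_{i=1}^n\frac{\phi(q_i^{m_i})}{2}+3$$ of the numbers in the set $$\{H_1\}\cup\{H_{a/(2^{e_i}q_i^{m_i})}:\ 1\le i\le n,\ 1\le a\le 2^{e_i}q_i^{m_i}-1\}$$ are linearly independent over $\overline{\mathbb{Q}}$.
   Context: $\phi$ is Euler's totient function and $\overline{\mathbb{Q}}$ is the field of algebraic numbers. For a complex number $r$ which is not a negative integer, $H_r=r\sum_{k=1}^{\infty}\frac{1}{k(r+k)}$; for integers $Q>1$ and $1\le a\le Q$ it satisfies Gauss's formula $H_{a/Q}=\frac Qa-\log(2Q)-\frac{\pi}{2}\cot(\pi a/Q)+2\sum_{k=1}^{\lfloor (Q-1)/2\rfloor}\cos(2\pi k a/Q)\log\sin(\pi k/Q)$. *)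

(* Defs.v *)
From Stdlib Require Import Reals Lra Lia ZArith Arith List Znumtheory ClassicalEpsilon.
Open Scope R_scope.

Definition totient (n : nat) : nat :=
  length (filter (fun k => Nat.eqb (Nat.gcd k n) 1) (seq 1 n)).

(* H_r = r * sum_{k>=1} 1/(k (r+k)); the sum is the limit chosen by epsilon
   (it exists for all r > 0, the only arguments used below). *)
Definition harm_series (r : R) : R :=
  epsilon (inhabits 0)
    (fun l => infinite_sum (fun k : nat => / (INR (S k) * (r + INR (S k)))) l).

Definition H (r : R) : R := r * harm_series r.

Fixpoint zpoly_eval (p : list Z) (x : R) : R :=
  match p with
  | nil => 0
  | c :: p' => IZR c + x * zpoly_eval p' x
  end.

Definition is_algebraic (x : R) : Prop :=
  exists p : list Z, Exists (fun c => c <> 0%Z) p /\ zpoly_eval p x = 0.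

Fixpoint lin_comb (cs xs : list R) : R :=
  match cs, xs with
  | c :: cs', x :: xs' => c * x + lin_comb cs' xs'
  | _, _ => 0
  end.

Definition alg_lin_indep (xs : list R) : Prop :=
  forall cs : list R,
    length cs = length xs ->
    Forall is_algebraic cs ->
    lin_comb cs xs = 0 ->
    Forall (fun c => c = 0) cs.

Fixpoint sumR_upto (n : nat) (f : nat -> R) : R :=
  match n with
  | O => 0
  | S n' => sumR_upto n' f + f n'
  end.

(* Main.v *)
Require Import Defs.
From Stdlib Require Import Reals ZArith Arith List Znumtheory.
From Stdlib Require Import Lra Lia ClassicalEpsilon Bool.
Open Scope R_scope.

Lemma cos_kPI (k : nat) : cos (PI * INR k) = (-1) ^ k.
Proof.
  induction k as [|k IH].
  - simpl. rewrite Rmult_0_r; apply cos_0.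
  - rewrite S_INR, Rmult_plus_distr_l, Rmult_1_r, neg_cos, IH. simpl. ring.
Qed.

Lemma cos_rec3 a x : cos (a + x) = (1+1) * cos x * cos a - cos (a - x).
Proof. rewrite cos_plus, cos_minus. ring. Qed.

Module AlgM.
From mathcomp Require Import all_boot all_algebra Rstruct.
Import GRing.Theory Num.Theory.
Local Open Scope ring_scope.

Definition Kalg (x : R) : Prop := algebraicOver (@ratr R) x.

Lemma Kalg_plus x y : Kalg x -> Kalg y -> Kalg (Rplus x y).
Proof. exact: algebraic_add. Qed.
Lemma Kalg_mult x y : Kalg x -> Kalg y -> Kalg (Rmult x y).
Proof. exact: algebraic_mul. Qed.
Lemma Kalg_opp x : Kalg x -> Kalg (Ropp x).
Proof. exact: algebraic_opp. Qed.
Lemma Kalg_inv x : Kalg x -> Kalg (Rinv x).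
Proof. exact: algebraic_inv. Qed.
Lemma Kalg_INR n : Kalg (INR n).
Proof. rewrite INRE -ratr_nat; exact: algebraic_id. Qed.
Lemma Kalg_IZR z : Kalg (IZR z).
Proof.
case: z => [|p|p]; first exact: (Kalg_INR 0%N).
- by rewrite IZRposE; apply: Kalg_INR.
- change (Kalg (Ropp (IZR (Zpos p)))); apply: Kalg_opp.
  by rewrite IZRposE; apply: Kalg_INR.
Qed.

Fixpoint chebp (k : nat) : {poly rat} * {poly rat} :=
  match k with
  | O => (1, 'X)
  | S k => let (a, b) := chebp k in (b, 2%:R *: 'X * b - a)
  end.
Definition cheb k := (chebp k).1.

Lemma chebpE k : chebp k = (cheb k, cheb k.+1).
Proof.
elim: k => [|k IH] //=. rewrite /cheb /= IH /=. by [].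
Qed.

Lemma cheb_rec k : cheb k.+2 = 2%:R *: 'X * cheb k.+1 - cheb k.
Proof. by rewrite {1}/cheb /= chebpE. Qed.

Lemma cheb_eval k x :
  (map_poly (@ratr R) (cheb k)).[cos x] = cos (INR k * x)
  /\ (map_poly (@ratr R) (cheb k.+1)).[cos x] = cos (INR k.+1 * x).
Proof.
elim: k => [|k [IH1 IH2]].
  split.
  - rewrite /cheb /= map_polyC /= hornerC rmorph1 /=.
    by rewrite Rmult_0_l cos_0.
  - rewrite /cheb /= map_polyX hornerX /=.
    by rewrite Rmult_1_l.
split => //.
have -> : Rmult (INR k.+2) x = Rplus (Rmult (INR k.+1) x) x.
  rewrite (S_INR k.+1); ring.
have E2 : Rmult (INR k) x = Rminus (Rmult (INR k.+1) x) x.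
  rewrite (S_INR k); ring.
rewrite cheb_rec rmorphB rmorphM /= map_polyZ map_polyX.
rewrite !hornerE IH1 IH2 rmorph_nat E2.
symmetry; exact: cos_rec3.
Qed.

Lemma size_cheb k : size (cheb k) = k.+1.
Proof.
have H : forall k, size (cheb k) = k.+1 /\ size (cheb k.+1) = k.+2.
  elim => [|j [H1 H2]].
    by rewrite /cheb /= size_polyC oner_neq0 size_polyX.
  split => //.
  rewrite cheb_rec size_addl ?size_polyN; last first.
    rewrite -scalerAl size_scale ?pnatr_eq0 // mulrC size_mulX; first by rewrite H2 H1.
    by rewrite -size_poly_eq0 H2.
  rewrite -scalerAl size_scale ?pnatr_eq0 // mulrC size_mulX; first by rewrite H2.
  by rewrite -size_poly_eq0 H2.
by case: (H k).
Qed.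

Lemma Kalg_cos k N : lt 0 N -> Kalg (cos (Rdiv (Rmult PI (INR k)) (INR N))).
Proof.
move=> /ltP HN.
exists (cheb N - ((-1) ^+ k)%:P).
  rewrite subr_eq0; apply/negP => /eqP E.
  have := size_cheb N; rewrite E size_polyC.
  case: (_ != 0) => /= [[H]|//]; by rewrite -H in HN.
apply/rootP.
rewrite rmorphB /= map_polyC /= hornerD hornerN hornerC.
have [-> _] := cheb_eval N (Rdiv (Rmult PI (INR k)) (INR N)).
have -> : Rmult (INR N) (Rdiv (Rmult PI (INR k)) (INR N)) = Rmult PI (INR k).
  field. apply not_0_INR. move=> H0; by rewrite H0 in HN.
rewrite cos_kPI rmorphXn rmorphN rmorph1 -RpowE.
by rewrite subrr.
Qed.

Definition int2Z (z : int) : Z :=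
  match z with Posz n => Z.of_nat n | Negz n => Z.opp (Z.of_nat n.+1) end.

Lemma IZR_int2Z z : IZR (int2Z z) = (z%:~R : R).
Proof.
case: z => n; rewrite /int2Z.
- by rewrite -INR_IZR_INZ INRE.
- rewrite opp_IZR -INR_IZR_INZ INRE NegzE mulrNz.
  by [].
Qed.

Lemma zpoly_eval_map (s : seq int) (x : R) :
  zpoly_eval (map int2Z s) x = horner_rec (map (fun c : int => (c%:~R : R)) s) x.
Proof.
elim: s => [|c s IH] //=.
rewrite IH IZR_int2Z -RplusE -RmultE.
by rewrite Rplus_comm Rmult_comm.
Qed.

Lemma Exists_nz (s : seq int) : ~~ all (fun c => c == 0) s ->
  Exists (fun c : Z => c <> Z0) (map int2Z s).
Proof.
elim: s => [|c s IH] //= /nandP [Hc|Hs].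
- apply: Exists_cons_hd => E. move/eqP: Hc; apply.
  case: c E => n /=; last by lia.
  by move=> E; rewrite (Nat2Z.inj n 0 E).
- apply: Exists_cons_tl. exact: IH.
Qed.

Lemma Kalg_is_alg x : Kalg x -> is_algebraic x.
Proof.
move=> [p nz_p /rootP px].
have [q [a nz_a Ep]] := rat_poly_scale p.
have nz_q : q != 0.
  apply: contraNneq nz_p => q0. by rewrite Ep q0 rmorph0 scaler0.
exists (map int2Z q); split.
  apply: Exists_nz; apply/negP => /allP Hall.
  have : lead_coef q \in (q : seq int).
    rewrite lead_coefE; apply: mem_nth. by rewrite prednK // size_poly_gt0.
  move/Hall/eqP; apply/eqP. by rewrite lead_coef_eq0.
rewrite zpoly_eval_map.
have Hq : (map_poly (fun c : int => (c%:~R : R)) q).[x] = 0.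
  move: px; rewrite Ep.
  have -> : map_poly (@ratr R) (a%:~R^-1 *: map_poly (intr : int -> rat) q)
     = (ratr (a%:~R^-1)) *: map_poly (fun c : int => (c%:~R : R)) q.
    apply/polyP => i. rewrite coefZ !coef_map_id0 ?rmorph0 // coefZ rmorphM.
    by rewrite coef_map_id0 ?rmorph0 //= ratr_int.
  rewrite hornerZ => /eqP. rewrite mulf_eq0 => /orP [|/eqP //].
  by rewrite fmorph_eq0 invr_eq0 intr_eq0 (negPf nz_a).
by rewrite map_polyE horner_Poly in Hq.
Qed.
End AlgM.
Definition Kalg := AlgM.Kalg.

Lemma K0 : Kalg 0. Proof. exact (AlgM.Kalg_IZR 0). Qed.
Lemma K1 : Kalg 1. Proof. exact (AlgM.Kalg_IZR 1). Qed.
Lemma Kplus x y : Kalg x -> Kalg y -> Kalg (x + y). Proof. apply AlgM.Kalg_plus. Qed.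
Lemma Kmult x y : Kalg x -> Kalg y -> Kalg (x * y). Proof. apply AlgM.Kalg_mult. Qed.
Lemma Kopp x : Kalg x -> Kalg (- x). Proof. apply AlgM.Kalg_opp. Qed.
Lemma Kinv x : Kalg x -> Kalg (/ x). Proof. apply AlgM.Kalg_inv. Qed.
Lemma Kminus x y : Kalg x -> Kalg y -> Kalg (x - y).
Proof. intros; unfold Rminus; apply Kplus; auto; apply Kopp; auto. Qed.
Lemma Kdiv x y : Kalg x -> Kalg y -> Kalg (x / y).
Proof. intros; unfold Rdiv; apply Kmult; auto; apply Kinv; auto. Qed.
Lemma KINR n : Kalg (INR n). Proof. apply AlgM.Kalg_INR. Qed.
Lemma KIZR z : Kalg (IZR z). Proof. apply AlgM.Kalg_IZR. Qed.

Lemma sum_ext n f g : (forall i, (i < n)%nat -> f i = g i) -> sumR_upto n f = sumR_upto n g.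
Proof. induction n; intros H; simpl; auto. rewrite IHn by (intros; apply H; lia). rewrite H by lia. auto. Qed.
Lemma sum_plus n f g : sumR_upto n (fun i => f i + g i) = sumR_upto n f + sumR_upto n g.
Proof. induction n; simpl; [ring|]. rewrite IHn; ring. Qed.
Lemma sum_scal n c f : sumR_upto n (fun i => c * f i) = c * sumR_upto n f.
Proof. induction n; simpl; [ring|]. rewrite IHn; ring. Qed.
Lemma sum_zero n f : (forall i, (i < n)%nat -> f i = 0) -> sumR_upto n f = 0.
Proof. induction n; intros H; simpl; auto. rewrite IHn, H by (intros; try apply H; lia). ring. Qed.
Lemma sum_swap n m (f : nat -> nat -> R) :
  sumR_upto n (fun i => sumR_upto m (fun j => f i j)) = sumR_upto m (fun j => sumR_upto n (fun i => f i j)).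
Proof.
  induction n; simpl.
  - symmetry; apply sum_zero; auto.
  - rewrite IHn, <- sum_plus. auto.
Qed.
Lemma sum_shift n f : sumR_upto (S n) f = f 0%nat + sumR_upto n (fun j => f (S j)).
Proof. induction n; simpl; [ring|]. simpl in IHn. rewrite IHn; ring. Qed.
Lemma sum_indic n k f : (k < n)%nat ->
  sumR_upto n (fun j => (if Nat.eqb j k then 1 else 0) * f j) = f k.
Proof.
  induction n; intros Hk; [lia|]. simpl.
  destruct (Nat.eq_dec k n) as [->|Hne].
  - rewrite Nat.eqb_refl, sum_zero. ring. intros i Hi.
    replace (Nat.eqb i n) with false by (symmetry; apply Nat.eqb_neq; lia). ring.
  - rewrite IHn by lia. replace (Nat.eqb n k) with false by (symmetry; apply Nat.eqb_neq; lia). ring.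
Qed.
Lemma K_sum n f : (forall i, Kalg (f i)) -> Kalg (sumR_upto n f).
Proof. intros H; induction n; simpl; [apply K0|apply Kplus; auto]. Qed.

Lemma homog : forall n m (A : nat -> nat -> R), (m < n)%nat -> (forall i j, Kalg (A i j)) ->
  exists lam : nat -> R, (forall j, Kalg (lam j)) /\ (exists j, (j < n)%nat /\ lam j <> 0) /\
    forall i, (i < m)%nat -> sumR_upto n (fun j => lam j * A i j) = 0.
Proof.
  induction n as [|n IH]; intros m A Hmn HK; [lia|].
  destruct (Classical_Prop.classic (forall i, (i < m)%nat -> A i n = 0)) as [Hz|Hnz].
  - exists (fun j => if Nat.eqb j n then 1 else 0). split; [|split].
    + intros j; destruct (Nat.eqb j n); [apply K1|apply K0].
    + exists n; split; [lia|]. rewrite Nat.eqb_refl; lra.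
    + intros i Hi. simpl. rewrite Nat.eqb_refl, Hz by auto.
      rewrite sum_zero. ring. intros j Hj.
      replace (Nat.eqb j n) with false by (symmetry; apply Nat.eqb_neq; lia). ring.
  - assert (exists r, (r < m)%nat /\ A r n <> 0) as [r [Hr Hrn]].
    { apply Classical_Prop.NNPP; intros Hne; apply Hnz; intros i Hi.
      apply Classical_Prop.NNPP; intros Hi'; apply Hne; exists i; auto. }
    set (rho := fun i => if Nat.eqb i r then (m - 1)%nat else i).
    set (B := fun i j => A (rho i) j - (A (rho i) n / A r n) * A r j).
    destruct (IH (m - 1)%nat B) as [mu [HmuK [[j0 [Hj0 Hmu0]] Hmu]]].
    { lia. }
    { intros i j; unfold B; apply Kminus; auto. apply Kmult; auto. apply Kdiv; auto. }
    set (S := sumR_upto n (fun j => mu j * A r j)).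
    set (c := - S / A r n).
    exists (fun j => if Nat.eqb j n then c else mu j). split; [|split].
    + intros j; destruct (Nat.eqb j n); auto. unfold c, S. apply Kdiv; auto.
      apply Kopp. apply K_sum. intros; apply Kmult; auto.
    + exists j0; split; [lia|]. replace (Nat.eqb j0 n) with false by (symmetry; apply Nat.eqb_neq; lia). auto.
    + intros i Hi. simpl. rewrite Nat.eqb_refl.
      rewrite (sum_ext n _ (fun j => mu j * A i j)).
      2:{ intros j Hj. replace (Nat.eqb j n) with false by (symmetry; apply Nat.eqb_neq; lia). auto. }
      destruct (Nat.eq_dec i r) as [->|Hir].
      * fold S. unfold c. field. auto.
      * assert (exists i', (i' < m - 1)%nat /\ rho i' = i) as [i' [Hi' Hrho]].
        { destruct (Nat.eq_dec i (m-1)) as [->|Him].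
          - exists r. split; [lia|]. unfold rho. rewrite Nat.eqb_refl. auto.
          - exists i. split; [lia|]. unfold rho.
            replace (Nat.eqb i r) with false by (symmetry; apply Nat.eqb_neq; lia). auto. }
        specialize (Hmu i' Hi'). unfold B in Hmu. rewrite Hrho in Hmu.
        rewrite (sum_ext n _ (fun j => mu j * A i j - (A i n / A r n) * (mu j * A r j))) in Hmu
          by (intros; ring).
        unfold Rminus in Hmu. rewrite sum_plus in Hmu.
        rewrite (sum_ext n (fun j => - (A i n / A r n * (mu j * A r j)))
                   (fun j => (- (A i n / A r n)) * (mu j * A r j))) in Hmu by (intros; ring).
        rewrite sum_scal in Hmu. fold S in Hmu.
        unfold c. field_simplify; [|auto].
        replace (sumR_upto n (fun j => mu j * A i j)) with (A i n / A r n * S) by lra.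
        field. auto.
Qed.

Inductive spn (Y : list R) : R -> Prop :=
| sp_in y : In y Y -> spn Y y
| sp_zero : spn Y 0
| sp_add x z : spn Y x -> spn Y z -> spn Y (x + z)
| sp_scal c x : Kalg c -> spn Y x -> spn Y (c * x).

Lemma spn_coef Y x : spn Y x -> exists c : nat -> R, (forall k, Kalg (c k)) /\
  x = sumR_upto (length Y) (fun k => c k * nth k Y 0).
Proof.
  induction 1.
  - destruct (In_nth Y y 0 H) as [k [Hk Hn]].
    exists (fun j => if Nat.eqb j k then 1 else 0). split.
    + intros j; destruct (Nat.eqb j k); [apply K1|apply K0].
    + rewrite sum_indic by auto. auto.
  - exists (fun _ => 0). split; [intros; apply K0|]. symmetry; apply sum_zero; intros; ring.
  - destruct IHspn1 as [c1 [H1 E1]]; destruct IHspn2 as [c2 [H2 E2]].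
    exists (fun k => c1 k + c2 k). split; [intros; apply Kplus; auto|].
    rewrite (sum_ext _ _ (fun k => c1 k * nth k Y 0 + c2 k * nth k Y 0)) by (intros; ring).
    rewrite sum_plus; subst; auto.
  - destruct IHspn as [c1 [H1 E1]].
    exists (fun k => c * c1 k). split; [intros; apply Kmult; auto|].
    rewrite (sum_ext _ _ (fun k => c * (c1 k * nth k Y 0))) by (intros; ring).
    rewrite sum_scal; subst; auto.
Qed.

Lemma spn_mono Y Y' x : incl Y Y' -> spn Y x -> spn Y' x.
Proof. intros Hi; induction 1; [apply sp_in; auto|apply sp_zero|apply sp_add; auto|apply sp_scal; auto]. Qed.

Lemma coef_all Y xs : (forall x, In x xs -> spn Y x) ->
  exists C : nat -> nat -> R, (forall j k, Kalg (C j k)) /\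
    forall j, (j < length xs)%nat -> nth j xs 0 = sumR_upto (length Y) (fun k => C j k * nth k Y 0).
Proof.
  induction xs as [|x xs IH]; intros H.
  - exists (fun _ _ => 0). split; [intros; apply K0|]. simpl; intros; lia.
  - destruct (spn_coef Y x (H x (or_introl eq_refl))) as [c [Hc Ec]].
    destruct IH as [C [HC EC]]. { intros; apply H; right; auto. }
    exists (fun j k => match j with O => c k | S j' => C j' k end). split.
    + intros [|j] k; auto.
    + intros [|j] Hj; simpl; auto. apply EC. simpl in Hj; lia.
Qed.

Lemma lin_comb_sum xs f s :
  lin_comb (map f (seq s (length xs))) xs = sumR_upto (length xs) (fun j => f (s + j)%nat * nth j xs 0).
Proof.
  revert s; induction xs as [|x xs IH]; intros s; [simpl; auto|].
  change (length (x :: xs)) with (S (length xs)). rewrite sum_shift.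
  transitivity (f s * x + lin_comb (map f (seq (S s) (length xs))) xs); [reflexivity|].
  rewrite IH. rewrite Nat.add_0_r. simpl nth.
  f_equal. apply sum_ext; intros; f_equal. f_equal. lia.
Qed.

Lemma span_bound (Y xs : list R) : (forall x, In x xs -> spn Y x) -> alg_lin_indep xs ->
  (length xs <= length Y)%nat.
Proof.
  intros Hs Hind. destruct (Nat.le_gt_cases (length xs) (length Y)) as [|Hlt]; auto.
  exfalso. destruct (coef_all Y xs Hs) as [C [HC EC]].
  destruct (homog (length xs) (length Y) (fun i j => C j i) Hlt) as [lam [HK [[j0 [Hj0 Hl0]] Hsol]]].
  { intros; auto. }
  set (cs := map lam (seq 0 (length xs))).
  assert (Hz : Forall (fun c => c = 0) cs).
  { apply Hind.
    - unfold cs; rewrite map_length, seq_length; auto.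
    - apply Forall_forall; intros c Hc. unfold cs in Hc. apply in_map_iff in Hc.
      destruct Hc as [j [<- _]]. apply AlgM.Kalg_is_alg. apply HK.
    - unfold cs; rewrite lin_comb_sum. simpl.
      rewrite (sum_ext _ _ (fun j => sumR_upto (length Y) (fun k => lam j * C j k * nth k Y 0))).
      2:{ intros j Hj. rewrite EC by auto. rewrite <- sum_scal. apply sum_ext; intros; ring. }
      rewrite sum_swap. apply sum_zero. intros k Hk.
      rewrite (sum_ext _ _ (fun j => nth k Y 0 * (lam j * C j k))) by (intros; ring).
      rewrite sum_scal. rewrite Hsol by auto. ring. }
  rewrite Forall_forall in Hz. apply Hl0. apply Hz. unfold cs. apply in_map. apply in_seq. lia.
Qed.
Definition hh (K : nat) : R := sumR_upto K (fun k => / (INR k + 1)).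
Definition GG (r : R) (K : nat) : R := sumR_upto K (fun k => / (INR k + 1 + r)).
Definition trm (r : R) (k : nat) : R := / (INR (S k) * (r + INR (S k))).

Lemma INR_nonneg n : 0 <= INR n. Proof. apply pos_INR. Qed.

Lemma Un_cv_ext u v l : (forall n, u n = v n) -> Un_cv u l -> Un_cv v l.
Proof. intros E H eps He. destruct (H eps He) as [N HN]. exists N; intros n Hn. rewrite <- E; auto. Qed.

Lemma Un_cv_ext_ev u v l N0 : (forall n, (N0 <= n)%nat -> u n = v n) -> Un_cv u l -> Un_cv v l.
Proof. intros E H eps He. destruct (H eps He) as [N HN]. exists (Nat.max N N0); intros n Hn.
  rewrite <- E by lia. apply HN; lia. Qed.

Lemma Un_cv_const c : Un_cv (fun _ => c) c.
Proof. intros eps He. exists 0%nat; intros. unfold R_dist. rewrite Rminus_diag, Rabs_R0; auto. Qed.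

Lemma Un_cv_scal c u l : Un_cv u l -> Un_cv (fun n => c * u n) (c * l).
Proof. intros H. apply CV_mult; auto. apply Un_cv_const. Qed.

Lemma Un_cv_sub u l (g : nat -> nat) : (forall n, (n <= g n)%nat) -> Un_cv u l -> Un_cv (fun n => u (g n)) l.
Proof. intros Hg H eps He. destruct (H eps He) as [N HN]. exists N; intros n Hn. apply HN. specialize (Hg n); lia. Qed.

Lemma Un_cv_unique u l1 l2 : Un_cv u l1 -> Un_cv u l2 -> l1 = l2.
Proof. apply UL_sequence. Qed.

Lemma lim_abs_le u l B : Un_cv u l -> (forall n, Rabs (u n) <= B) -> Rabs l <= B.
Proof.
  intros H Hb. destruct (Rle_or_lt (Rabs l) B) as [|Hlt]; auto. exfalso.
  destruct (H (Rabs l - B)) as [N HN]; [lra|]. specialize (HN N (le_n N)). specialize (Hb N).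
  unfold R_dist in HN. pose proof (Rabs_triang_inv l (u N)).
  rewrite <- Rabs_Ropp in HN. replace (- (u N - l)) with (l - u N) in HN by ring. lra.
Qed.

Lemma inv_lim : Un_cv (fun n => / (INR n + 1)) 0.
Proof.
  intros eps He. destruct (archimed_cor1 eps He) as [N [HN HN0]].
  exists N. intros n Hn. unfold R_dist. rewrite Rminus_0_r.
  assert (0 < INR N) by (apply lt_0_INR; lia).
  assert (INR N <= INR n) by (apply le_INR; lia).
  rewrite Rabs_right. 2:{ apply Rle_ge, Rlt_le, Rinv_0_lt_compat. pose proof (INR_nonneg n); lra. }
  apply Rle_lt_trans with (/ INR N); auto. apply Rinv_le_contravar; lra.
Qed.

Lemma sum_f_R0_sumR f n : sum_f_R0 f n = sumR_upto (S n) f.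
Proof. induction n; simpl; [ring|]. rewrite IHn; simpl; ring. Qed.

Lemma sum_S n f : sumR_upto (S n) f = sumR_upto n f + f n.
Proof. reflexivity. Qed.

Lemma sum_le n f g : (forall i, (i < n)%nat -> f i <= g i) -> sumR_upto n f <= sumR_upto n g.
Proof. induction n; intros H; simpl; [lra|]. apply Rplus_le_compat; [apply IHn; intros; apply H; lia|apply H; lia]. Qed.

Lemma sum_abs_le n f : Rabs (sumR_upto n f) <= sumR_upto n (fun i => Rabs (f i)).
Proof. induction n; simpl. rewrite Rabs_R0; lra. eapply Rle_trans; [apply Rabs_triang|]. lra. Qed.

Lemma basel_bound K : sumR_upto K (fun k => / (INR k + 1) ^ 2) <= 2 - 2 / (INR K + 1).
Proof.
  induction K. { simpl. lra. } rewrite sum_S.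
  rewrite S_INR. pose proof (INR_nonneg K).
  assert (/ (INR K + 1) ^ 2 <= 2 / (INR K + 1) - 2 / (INR K + 1 + 1)).
  { replace (2 / (INR K + 1) - 2 / (INR K + 1 + 1)) with (2 / ((INR K + 1) * (INR K + 1 + 1))) by (field; lra).
    replace (2 / ((INR K + 1) * (INR K + 1 + 1))) with (/ ((INR K + 1) * (INR K + 1 + 1) / 2)) by (field; lra).
    apply Rinv_le_contravar. { apply Rmult_lt_0_compat; [apply Rmult_lt_0_compat|]; lra. }
    simpl. nra. }
  lra.
Qed.
Lemma trm_pos r k : 0 <= r -> 0 < trm r k.
Proof. intros Hr. unfold trm. apply Rinv_0_lt_compat. rewrite S_INR. pose proof (INR_nonneg k). apply Rmult_lt_0_compat; lra. Qed.

Lemma trm_le r k : 0 <= r -> trm r k <= / (INR k + 1) ^ 2.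
Proof. intros Hr. unfold trm. rewrite S_INR. pose proof (INR_nonneg k).
  apply Rinv_le_contravar. { simpl. apply Rmult_lt_0_compat; lra. } simpl. nra. Qed.

Lemma hs_conv r : 0 <= r -> Un_cv (fun K => sumR_upto K (trm r)) (harm_series r).
Proof.
  intros Hr. set (u := fun K => sumR_upto K (trm r)).
  assert (Hg : Un_growing u). { intros n. unfold u. rewrite sum_S. pose proof (trm_pos r n Hr). lra. }
  assert (Hb : bound (EUn u)).
  { exists 2. intros x [i ->]. unfold u. eapply Rle_trans.
    - apply sum_le. intros; apply trm_le; auto.
    - pose proof (basel_bound i). assert (0 <= 2 / (INR i + 1)).
      { pose proof (INR_nonneg i). unfold Rdiv. apply Rmult_le_pos; [lra|]. apply Rlt_le, Rinv_0_lt_compat; lra. }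
      lra. }
  destruct (growing_cv u Hg Hb) as [l Hl].
  assert (Hs : infinite_sum (trm r) l).
  { intros eps He. destruct (Hl eps He) as [N HN]. exists N. intros n Hn.
    rewrite sum_f_R0_sumR. apply HN. lia. }
  assert (Hh : infinite_sum (trm r) (harm_series r)).
  { unfold harm_series. apply epsilon_spec. exists l. exact Hs. }
  rewrite (uniqueness_sum _ _ _ Hh Hs). exact Hl.
Qed.

Lemma H_lim r : 0 <= r -> Un_cv (fun K => hh K - GG r K) (H r).
Proof.
  intros Hr. unfold H. apply Un_cv_ext with (fun K => r * sumR_upto K (trm r)).
  - intros K. unfold hh, GG. induction K. simpl; ring.
    rewrite !sum_S, Rmult_plus_distr_l, IHK. unfold trm. rewrite S_INR.
    pose proof (INR_nonneg K). field. split; lra.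
  - apply Un_cv_scal. apply hs_conv; auto.
Qed.

Lemma H0 : H 0 = 0. Proof. unfold H. ring. Qed.

Lemma H1 : H 1 = 1.
Proof.
  apply Un_cv_unique with (fun K => hh K - GG 1 K). { apply H_lim; lra. }
  apply Un_cv_ext with (fun K => 1 - / (INR K + 1)).
  - intros K. unfold hh, GG. induction K. simpl. field.
    rewrite !sum_S. rewrite S_INR. pose proof (INR_nonneg K).
    replace (sumR_upto K (fun k => / (INR k + 1)) + / (INR K + 1) -
      (sumR_upto K (fun k => / (INR k + 1 + 1)) + / (INR K + 1 + 1)))
    with ((sumR_upto K (fun k => / (INR k + 1)) - sumR_upto K (fun k => / (INR k + 1 + 1)))
         + / (INR K + 1) - / (INR K + 1 + 1)) by ring.
    rewrite <- IHK. field. lra.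
  - pose proof (CV_minus _ _ _ _ (Un_cv_const 1) inv_lim) as Hc. rewrite Rminus_0_r in Hc. exact Hc.
Qed.

Lemma H_lip r t : 0 <= r -> 0 <= t -> Rabs (H r - H t) <= 2 * Rabs (r - t).
Proof.
  intros Hr Ht.
  apply lim_abs_le with (fun K => (hh K - GG r K) - (hh K - GG t K)).
  { apply CV_minus; apply H_lim; auto. }
  intros K.
  replace (hh K - GG r K - (hh K - GG t K)) with
    (sumR_upto K (fun k => (r - t) * / ((INR k + 1 + t) * (INR k + 1 + r)))).
  2:{ unfold GG. induction K. simpl; ring. rewrite !sum_S, IHK. pose proof (INR_nonneg K). field. split; lra. }
  eapply Rle_trans; [apply sum_abs_le|].
  eapply Rle_trans.
  { apply sum_le with (g := fun k => Rabs (r - t) * / (INR k + 1) ^ 2). intros k Hk.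
    rewrite Rabs_mult. apply Rmult_le_compat_l; [apply Rabs_pos|].
    pose proof (INR_nonneg k).
    rewrite Rabs_right. 2:{ apply Rle_ge, Rlt_le, Rinv_0_lt_compat, Rmult_lt_0_compat; lra. }
    apply Rinv_le_contravar. { simpl. apply Rmult_lt_0_compat; lra. } simpl. nra. }
  rewrite sum_scal. pose proof (basel_bound K). pose proof (Rabs_pos (r - t)).
  assert (0 <= 2 / (INR K + 1)).
  { pose proof (INR_nonneg K). unfold Rdiv. apply Rmult_le_pos; [lra|]. apply Rlt_le, Rinv_0_lt_compat; lra. }
  rewrite Rmult_comm. apply Rmult_le_compat_r; auto. lra.
Qed.
Lemma ln_le_x x : -1 < x -> ln (1 + x) <= x.
Proof.
  intros Hx. pose proof (exp_ineq1_le x). destruct H as [Hlt|Heq].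
  - left. rewrite <- (ln_exp x) at 2. apply ln_increasing; lra.
  - right. rewrite Heq, ln_exp. auto.
Qed.

Lemma sum_minus n f g : sumR_upto n (fun i => f i - g i) = sumR_upto n f - sumR_upto n g.
Proof. induction n; simpl; [ring|]. rewrite IHn; ring. Qed.

Lemma sum_app a b g : sumR_upto (a + b) g = sumR_upto a g + sumR_upto b (fun j => g (a + j)%nat).
Proof. induction b. simpl. rewrite Nat.add_0_r; ring. rewrite Nat.add_succ_r, !sum_S, IHb. ring. Qed.

Lemma sum_double N K g : sumR_upto (N * K) g = sumR_upto K (fun k => sumR_upto N (fun j => g (N * k + j)%nat)).
Proof. induction K. rewrite Nat.mul_0_r; reflexivity. rewrite sum_S, <- IHK, Nat.mul_succ_r, sum_app. auto. Qed.

Lemma Un_cv_sum N (u : nat -> nat -> R) (l : nat -> R) :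
  (forall j, (j < N)%nat -> Un_cv (u j) (l j)) -> Un_cv (fun K => sumR_upto N (fun j => u j K)) (sumR_upto N l).
Proof.
  induction N; intros H. simpl. apply Un_cv_const.
  simpl. apply CV_plus. apply IHN; intros; apply H; lia. apply H; lia.
Qed.

Lemma hh_diff_bounds K d : (1 <= K)%nat ->
  ln (INR (K + d) + 1) - ln (INR K + 1) <= hh (K + d) - hh K <= ln (INR (K + d)) - ln (INR K).
Proof.
  intros HK. induction d.
  - rewrite Nat.add_0_r. lra.
  - rewrite Nat.add_succ_r. unfold hh in *. rewrite sum_S. rewrite S_INR.
    assert (1 <= INR (K + d)) by (replace 1 with (INR 1) by auto; apply le_INR; lia).
    set (n := INR (K + d)) in *.
    assert (A1 : ln (n + 1 + 1) - ln (n + 1) <= / (n + 1)).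
    { replace (n + 1 + 1) with ((n + 1) * (1 + / (n + 1))) by (field; lra).
      rewrite ln_mult by (try apply Rplus_lt_0_compat; try apply Rinv_0_lt_compat; lra).
      assert (P : 0 < / (n + 1)) by (apply Rinv_0_lt_compat; lra).
      pose proof (ln_le_x (/ (n + 1)) ltac:(lra)) as Q. lra. }
    assert (A2 : / (n + 1) <= ln (n + 1) - ln n).
    { assert (P : / (n + 1) < 1). { rewrite <- Rinv_1. apply Rinv_lt_contravar; lra. }
      assert (P2 : 0 < / (n + 1)) by (apply Rinv_0_lt_compat; lra).
      assert (E : ln n = ln (n + 1) + ln (1 + - / (n + 1))).
      { rewrite <- ln_mult by lra. f_equal. field. lra. }
      pose proof (ln_le_x (- / (n + 1)) ltac:(lra)) as Q. lra. }
    lra.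
Qed.

Lemma hh_lim N : (1 <= N)%nat -> Un_cv (fun K => hh (N * K + N - 1) - hh K) (ln (INR N)).
Proof.
  intros HN eps He.
  destruct (archimed_cor1 eps He) as [K0 [HK0 HK0p]].
  exists K0. intros K HK. unfold R_dist.
  assert (HK1 : (1 <= K)%nat) by lia.
  assert (Hd : (N * K + N - 1 = K + (N * K + N - 1 - K))%nat) by nia.
  pose proof (hh_diff_bounds K (N * K + N - 1 - K) HK1) as [Lo Up].
  rewrite <- Hd in Lo, Up.
  assert (HKr : 1 <= INR K) by (replace 1 with (INR 1) by auto; apply le_INR; lia).
  assert (HNr : 1 <= INR N) by (replace 1 with (INR 1) by auto; apply le_INR; lia).
  assert (E1 : INR (N * K + N - 1) + 1 = INR N * (INR K + 1)).
  { rewrite minus_INR by nia. rewrite plus_INR, mult_INR. simpl. ring. }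
  rewrite E1 in Lo. rewrite ln_mult in Lo by lra.
  assert (E2 : ln (INR (N * K + N - 1)) <= ln (INR N) + ln (INR K + 1)).
  { rewrite <- ln_mult by lra. rewrite <- E1.
    destruct (Req_dec (INR (N * K + N - 1)) 0) as [Z|Z].
    - exfalso. assert (INR (N*K+N-1) >= 1). { apply Rle_ge. replace 1 with (INR 1) by auto. apply le_INR. nia. } lra.
    - left. apply ln_increasing. pose proof (INR_nonneg (N * K + N - 1)). lra. lra. }
  assert (E3 : ln (INR K + 1) - ln (INR K) <= / INR K).
  { replace (INR K + 1) with (INR K * (1 + / INR K)) by (field; lra).
    rewrite ln_mult. 2: lra. 2:{ assert (0 < / INR K) by (apply Rinv_0_lt_compat; lra). lra. }
    pose proof (ln_le_x (/ INR K)). assert (0 < / INR K) by (apply Rinv_0_lt_compat; lra). specialize (H ltac:(lra)). lra. }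
  assert (E4 : / INR K <= / INR K0).
  { apply Rinv_le_contravar. apply lt_0_INR; lia. apply le_INR; lia. }
  apply Rabs_def1; lra.
Qed.

Lemma GG_scale N s j K : (1 <= N)%nat -> 0 <= s ->
  GG ((s + INR j) / INR N) K = INR N * sumR_upto K (fun k => / (INR N * (INR k + 1) + s + INR j)).
Proof.
  intros HN Hs. unfold GG. rewrite <- sum_scal. apply sum_ext. intros k Hk.
  assert (1 <= INR N) by (replace 1 with (INR 1) by auto; apply le_INR; lia).
  pose proof (INR_nonneg k). pose proof (INR_nonneg j).
  field. split; try lra. nra.
Qed.

Lemma dist_rel (N : nat) (s : R) : (1 <= N)%nat -> 0 <= s ->
  sumR_upto N (fun j => H ((s + INR j) / INR N)) =
  INR N * H s + INR N * GG s (N - 1) - INR N * ln (INR N).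
Proof.
  intros HN Hs.
  assert (HNr : 1 <= INR N) by (replace 1 with (INR 1) by auto; apply le_INR; lia).
  assert (Hpos : forall j, 0 <= (s + INR j) / INR N).
  { intros j. pose proof (INR_nonneg j). unfold Rdiv. apply Rmult_le_pos. lra. apply Rlt_le, Rinv_0_lt_compat; lra. }
  apply Un_cv_unique with (fun K => sumR_upto N (fun j => hh K - GG ((s + INR j) / INR N) K)).
  { apply Un_cv_sum. intros; apply H_lim; auto. }
  set (L := fun K => (N * K + N - 1)%nat).
  apply Un_cv_ext with (fun K => INR N * (hh (L K) - GG s (L K)) + INR N * GG s (N - 1)
                                  - INR N * (hh (L K) - hh K)).
  2:{ apply CV_minus. apply CV_plus. apply Un_cv_scal.
      apply Un_cv_sub with (u := fun M => hh M - GG s M). { intros; unfold L; nia. } apply H_lim; auto.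
      apply Un_cv_const. apply Un_cv_scal. apply hh_lim; auto. }
  intros K.
  rewrite sum_minus.
  rewrite (sum_ext N (fun j => GG ((s + INR j) / INR N) K)
     (fun j => INR N * sumR_upto K (fun k => / (INR N * (INR k + 1) + s + INR j)))).
  2:{ intros j Hj. rewrite GG_scale by auto. ring. }
  rewrite sum_scal. rewrite sum_swap.
  assert (E : sumR_upto K (fun k => sumR_upto N (fun j => / (INR N * (INR k + 1) + s + INR j)))
             = GG s (L K) - GG s (N - 1)).
  { unfold L. replace (N * K + N - 1)%nat with ((N - 1) + N * K)%nat by nia.
    unfold GG at 1. rewrite sum_app. fold (GG s (N - 1)).
    rewrite sum_double. ring_simplify. apply sum_ext; intros k Hk. apply sum_ext; intros j Hj.
    f_equal. rewrite plus_INR, plus_INR, mult_INR, minus_INR by lia. simpl. ring. }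
  rewrite E.
  assert (C : sumR_upto N (fun _ => hh K) = INR N * hh K).
  { clear. induction N. simpl; ring. rewrite sum_S, IHN, S_INR. ring. }
  rewrite C. ring.
Qed.
Definition cot (t : R) : R := cos t / sin t.

Lemma sin_lb3 u : 0 <= u <= 1 -> u - u ^ 3 / 6 <= sin u.
Proof.
  intros Hu. pose proof PI2_1.
  destruct (SIN u) as [Hl _]; try lra.
  unfold sin_lb, sin_approx in Hl. simpl sum_f_R0 in Hl. unfold sin_term in Hl.
  replace (INR (fact (2 * 3 + 1))) with 5040 in Hl by (rewrite INR_IZR_INZ; reflexivity).
  replace (INR (fact (2 * 2 + 1))) with 120 in Hl by (rewrite INR_IZR_INZ; reflexivity).
  replace (INR (fact (2 * 1 + 1))) with 6 in Hl by (rewrite INR_IZR_INZ; reflexivity).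
  replace (INR (fact (2 * 0 + 1))) with 1 in Hl by (rewrite INR_IZR_INZ; reflexivity).
  simpl in Hl.
  assert (P5 : 0 <= u * (u * (u * (u * (u * 1))))) by (repeat apply Rmult_le_pos; lra).
  assert (P7 : u * (u * (u * (u * (u * (u * (u * 1)))))) <= u * (u * (u * (u * (u * 1))))).
  { replace (u * (u * (u * (u * (u * (u * (u * 1)))))))  with ((u * (u * (u * (u * (u * 1))))) * (u * u)) by ring.
    assert (u * u <= 1) by nra. nra. }
  simpl. lra.
Qed.

Lemma cos_lb2 u : 0 <= u <= 1 -> 1 - u ^ 2 / 2 <= cos u.
Proof.
  intros Hu. assert (E : cos u = 1 - 2 * sin (u / 2) * sin (u / 2)).
  { rewrite <- cos_2a_sin. f_equal. field. }
  rewrite E.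
  pose proof PI2_1.
  assert (0 <= sin (u / 2)) by (apply sin_ge_0; lra).
  destruct (Req_dec u 0) as [->|Hn].
  - replace (0/2) with 0 by field. rewrite sin_0. simpl. lra.
  - assert (sin (u / 2) < u / 2) by (apply sin_lt_x; lra).
    simpl. nra.
Qed.

Lemma cot_bound u : 0 < u <= 1 -> Rabs (/ u - cot u) <= u.
Proof.
  intros Hu. unfold cot. pose proof (sin_lt_x u ltac:(lra)) as S1. pose proof (sin_lb3 u ltac:(lra)) as S2.
  pose proof (cos_lb2 u ltac:(lra)) as C1. pose proof (COS_bound u) as [_ C2].
  assert (Hs : 0 < sin u). { simpl in S2. assert (u * (u * (u * 1)) / 6 < u) by nra. lra. }
  replace (/ u - cos u / sin u) with ((sin u - u * cos u) / (u * sin u)) by (field; lra).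
  assert (Hus : 0 < u * sin u) by nra.
  assert (Q : (sin u - u * cos u) / (u * sin u) * (u * sin u) = sin u - u * cos u) by (field; lra).
  simpl in S2, C1.
  assert (L1 : sin u - u * cos u <= u * (u * u) / 2) by nra.
  assert (L2 : - (u * (u * u)) / 6 <= sin u - u * cos u) by nra.
  assert (L3 : u * (u * u) <= u * (u * sin u) * 2). { assert (u * u / 2 <= sin u * u) by nra. nra. }
  apply Rabs_le; split; apply Rmult_le_reg_r with (u * sin u); auto; rewrite Q; nra.
Qed.


Definition Tf x := / x - / (1 - x) - PI * cot (PI * x).
Definition gf x := H x - H (1 - x) - Tf x.

Lemma cot_dup x : 0 < x < 1 -> cot (PI * (x / 2)) + cot (PI * ((x + 1) / 2)) = 2 * cot (PI * x).
Proof.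
  intros Hx. pose proof PI_RGT_0. set (t := PI * (x / 2)).
  assert (E1 : PI * ((x + 1) / 2) = t + PI / 2) by (unfold t; field).
  assert (E2 : PI * x = 2 * t) by (unfold t; field).
  rewrite E1, E2. unfold cot. rewrite sin_2a, cos_2a, sin_plus, cos_plus, sin_PI2, cos_PI2.
  assert (0 < sin t) by (apply sin_gt_0; unfold t; nra).
  assert (0 < cos t) by (apply cos_gt_0; unfold t; nra).
  field. lra.
Qed.

Lemma Tf_dup x : 0 < x < 1 -> Tf (x / 2) + Tf ((x + 1) / 2) = 2 * Tf x + 2 / (x + 1) - 2 / (2 - x).
Proof.
  intros Hx. unfold Tf. pose proof (cot_dup x Hx) as Hc.
  replace (PI * cot (PI * (x / 2))) with (PI * (2 * cot (PI * x) - cot (PI * ((x + 1) / 2)))) by (rewrite <- Hc; ring).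
  field. repeat split; lra.
Qed.

Lemma dist2 s : 0 <= s -> H (s / 2) + H ((s + 1) / 2) = 2 * H s + 2 / (s + 1) - 2 * ln 2.
Proof.
  intros Hs. pose proof (dist_rel 2 s ltac:(lia) Hs) as D.
  rewrite !sum_S in D. change (sumR_upto 0 _) with 0 in D.
  change (GG s (2 - 1)) with (GG s 1) in D. unfold GG in D. rewrite sum_S in D.
  change (sumR_upto 0 _) with 0 in D.
  replace (INR 0) with 0 in D by reflexivity. replace (INR 1) with 1 in D by reflexivity.
  replace (INR 2) with 2 in D by (simpl; ring).
  rewrite Rplus_0_r in D.
  replace (2 / (s + 1)) with (2 * / (0 + 1 + s)) by (field; lra).
  lra.
Qed.

Lemma gf_dup x : 0 < x < 1 -> gf (x / 2) + gf ((x + 1) / 2) = 2 * gf x.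
Proof.
  intros Hx. unfold gf.
  pose proof (Tf_dup x Hx) as T. pose proof (dist2 x ltac:(lra)) as D1. pose proof (dist2 (1 - x) ltac:(lra)) as D2.
  replace (1 - x / 2) with ((1 - x + 1) / 2) by field.
  replace (1 - (x + 1) / 2) with ((1 - x) / 2) by field.
  replace (2 / (1 - x + 1)) with (2 / (2 - x)) in D2 by (f_equal; ring).
  lra.
Qed.

Lemma cot_refl x : cot (PI * (1 - x)) = - cot (PI * x).
Proof.
  unfold cot. replace (PI * (1 - x)) with (PI - PI * x) by ring.
  rewrite sin_PI_x, cos_minus, cos_PI, sin_PI. unfold Rdiv. ring.
Qed.

Lemma gf_refl x : gf (1 - x) = - gf x.
Proof. unfold gf, Tf. rewrite cot_refl. replace (1 - (1 - x)) with x by ring. ring. Qed.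

Lemma gf_small x : 0 < x <= 1 / 4 -> Rabs (gf x) <= 22 * x.
Proof.
  intros Hx. pose proof PI_RGT_0 as Hpi. pose proof PI_4 as Hpi4.
  assert (E : gf x = (H x - H 0) - (H (1 - x) - H 1) + (/ (1 - x) - 1) + (PI * cot (PI * x) - / x)).
  { unfold gf, Tf. rewrite H0, H1. ring. }
  rewrite E.
  pose proof (H_lip x 0 ltac:(lra) ltac:(lra)) as L1.
  pose proof (H_lip (1 - x) 1 ltac:(lra) ltac:(lra)) as L2.
  replace (x - 0) with x in L1 by ring. replace (1 - x - 1) with (- x) in L2 by ring.
  rewrite Rabs_Ropp in L2. rewrite (Rabs_right x) in L1, L2 by lra.
  assert (L3 : Rabs (/ (1 - x) - 1) <= 2 * x).
  { replace (/ (1 - x) - 1) with (x / (1 - x)) by (field; lra).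
    rewrite Rabs_right. 2:{ apply Rle_ge. unfold Rdiv. apply Rmult_le_pos; [lra|]. apply Rlt_le, Rinv_0_lt_compat; lra. }
    apply Rmult_le_reg_r with (1 - x); [lra|]. unfold Rdiv. rewrite Rmult_assoc, Rinv_l by lra. nra. }
  assert (L4 : Rabs (PI * cot (PI * x) - / x) <= 16 * x).
  { pose proof (cot_bound (PI * x) ltac:(split; nra)) as CB.
    replace (PI * cot (PI * x) - / x) with (- PI * (/ (PI * x) - cot (PI * x))) by (field; lra).
    rewrite Rabs_mult, Rabs_Ropp, Rabs_right by lra.
    apply Rle_trans with (PI * (PI * x)). apply Rmult_le_compat_l. lra. exact CB. replace (PI * (PI * x)) with ((PI * PI) * x) by ring. apply Rmult_le_compat_r; nra. }
  eapply Rle_trans. apply Rabs_triang. eapply Rle_trans. apply Rplus_le_compat_r. apply Rabs_triang.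
  eapply Rle_trans. apply Rplus_le_compat_r. apply Rplus_le_compat_r. apply Rabs_triang.
  rewrite Rabs_Ropp. lra.
Qed.

Lemma cp_plus f g c : continuity_pt f c -> continuity_pt g c -> continuity_pt (fun x => f x + g x) c.
Proof. intros A B; exact (continuity_pt_plus f g c A B). Qed.
Lemma cp_minus f g c : continuity_pt f c -> continuity_pt g c -> continuity_pt (fun x => f x - g x) c.
Proof. intros A B; exact (continuity_pt_minus f g c A B). Qed.
Lemma cp_mult f g c : continuity_pt f c -> continuity_pt g c -> continuity_pt (fun x => f x * g x) c.
Proof. intros A B; exact (continuity_pt_mult f g c A B). Qed.
Lemma cp_div f g c : continuity_pt f c -> continuity_pt g c -> g c <> 0 -> continuity_pt (fun x => f x / g x) c.
Proof. intros A B C; exact (continuity_pt_div f g c A B C). Qed.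
Lemma cp_inv f c : continuity_pt f c -> f c <> 0 -> continuity_pt (fun x => / f x) c.
Proof. intros A B; exact (continuity_pt_inv f c A B). Qed.
Lemma cp_const k c : continuity_pt (fun _ => k) c.
Proof. apply continuity_pt_const. intros a b; auto. Qed.
Lemma cp_id c : continuity_pt (fun x => x) c.
Proof. apply derivable_continuous_pt. apply derivable_pt_id. Qed.
Lemma cp_comp f g c : continuity_pt f c -> continuity_pt g (f c) -> continuity_pt (fun x => g (f x)) c.
Proof. intros A B; exact (continuity_pt_comp f g c A B). Qed.

Lemma H_cont c : 0 < c -> continuity_pt H c.
Proof.
  intros Hc eps He. exists (Rmin c (eps / 3)). split.
  { apply Rmin_pos; lra. }
  intros x [_ Hx]. simpl in *. unfold Rdist in *.
  assert (Hm1 : Rmin c (eps / 3) <= c) by apply Rmin_l.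
  assert (Hm2 : Rmin c (eps / 3) <= eps / 3) by apply Rmin_r.
  assert (Hx0 : 0 <= x). { apply Rabs_def2 in Hx. lra. }
  pose proof (H_lip x c Hx0 ltac:(lra)). lra.
Qed.

Lemma gf_cont c : 0 < c < 1 -> continuity_pt gf c.
Proof.
  intros Hc. pose proof PI_RGT_0 as Hpi. unfold gf, Tf, cot.
  assert (Hs : sin (PI * c) <> 0). { assert (0 < sin (PI * c)) by (apply sin_gt_0; nra). lra. }
  apply cp_minus. apply cp_minus. apply H_cont; lra.
  apply (cp_comp (fun x => 1 - x) H). apply cp_minus. apply cp_const. apply cp_id. apply H_cont; lra.
  apply cp_minus. apply cp_minus. apply cp_inv. apply cp_id. lra.
  apply cp_inv. apply cp_minus. apply cp_const. apply cp_id. lra.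
  apply cp_mult. apply cp_const. apply cp_div.
  apply (cp_comp (fun x => PI * x) cos). apply cp_mult; [apply cp_const|apply cp_id]. apply continuity_cos.
  apply (cp_comp (fun x => PI * x) sin). apply cp_mult; [apply cp_const|apply cp_id]. apply continuity_sin.
  auto.
Qed.

Definition Gf (x : R) : R :=
  if Rlt_dec 0 x then (if Rlt_dec x 1 then gf x else 0) else 0.

Lemma Gf_in x : 0 < x < 1 -> Gf x = gf x.
Proof. intros Hx. unfold Gf. destruct (Rlt_dec 0 x); [|lra]. destruct (Rlt_dec x 1); lra. Qed.
Lemma Gf_out x : x <= 0 \/ 1 <= x -> Gf x = 0.
Proof. intros Hx. unfold Gf. destruct (Rlt_dec 0 x); auto. destruct (Rlt_dec x 1); auto. lra. Qed.

Lemma Gf_small x : Rabs x < 1 / 4 -> Rabs (Gf x) <= 22 * Rabs x.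
Proof.
  intros Hx. destruct (Rle_or_lt x 0) as [Hn|Hp].
  - rewrite Gf_out by auto. rewrite Rabs_R0. pose proof (Rabs_pos x). lra.
  - apply Rabs_def2 in Hx. rewrite Gf_in by lra. rewrite (Rabs_right x) by lra. apply gf_small. lra.
Qed.

Lemma Gf_cont c : 0 <= c <= 1 -> continuity_pt Gf c.
Proof.
  intros Hc.
  destruct (Req_dec c 0) as [->|H0c]; [|destruct (Req_dec c 1) as [->|H1c]].
  - intros eps He. exists (Rmin (1/4) (eps / 23)). split. { apply Rmin_pos; lra. }
    intros x [_ Hx]. simpl in *. unfold Rdist in *. rewrite Rminus_0_r in Hx.
    rewrite (Gf_out 0) by lra. rewrite Rminus_0_r.
    assert (Rmin (1/4) (eps/23) <= 1/4) by apply Rmin_l. assert (Rmin (1/4) (eps/23) <= eps/23) by apply Rmin_r.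
    pose proof (Gf_small x ltac:(lra)). pose proof (Rabs_pos x). lra.
  - intros eps He. exists (Rmin (1/4) (eps / 23)). split. { apply Rmin_pos; lra. }
    intros x [_ Hx]. simpl in *. unfold Rdist in *.
    rewrite (Gf_out 1) by lra. rewrite Rminus_0_r.
    assert (Rmin (1/4) (eps/23) <= 1/4) by apply Rmin_l. assert (Rmin (1/4) (eps/23) <= eps/23) by apply Rmin_r.
    assert (E : Gf x = - Gf (1 - x)).
    { destruct (Rlt_dec 0 x); destruct (Rlt_dec x 1).
      - rewrite Gf_in, Gf_in by lra. replace x with (1 - (1 - x)) at 1 by ring. rewrite gf_refl. ring.
      - rewrite Gf_out, Gf_out by lra. ring.
      - rewrite Gf_out, Gf_out by lra. ring.
      - rewrite Gf_out, Gf_out by lra. ring. }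
    rewrite E, Rabs_Ropp.
    replace (1 - x) with (- (x - 1)) by ring.
    pose proof (Gf_small (- (x - 1))) as G1. rewrite Rabs_Ropp in G1. specialize (G1 ltac:(lra)). lra.
  - apply continuity_pt_locally_ext with gf (Rmin c (1 - c)).
    { apply Rmin_pos; lra. }
    { intros y Hy. unfold Rdist in Hy. symmetry. apply Gf_in.
      assert (Rmin c (1 - c) <= c) by apply Rmin_l. assert (Rmin c (1 - c) <= 1 - c) by apply Rmin_r.
      apply Rabs_def2 in Hy. lra. }
    apply gf_cont. lra.
Qed.

Lemma pow2_ge n : INR n <= 2 ^ n.
Proof. induction n. simpl; lra. rewrite S_INR. simpl. assert (1 <= 2 ^ n) by (apply pow_R1_Rle; lra). lra. Qed.

Lemma dup_max (phi : R -> R) :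
  (forall c, 0 <= c <= 1 -> continuity_pt phi c) -> phi 0 = 0 -> phi 1 = 0 ->
  (forall x, 0 < x < 1 -> phi (x / 2) + phi ((x + 1) / 2) = 2 * phi x) ->
  forall x, 0 <= x <= 1 -> phi x <= 0.
Proof.
  intros Hc P0 P1 Hd x Hx.
  destruct (continuity_ab_maj phi 0 1 ltac:(lra) Hc) as [Mx [HM HMx]].
  destruct (Rle_or_lt (phi Mx) 0) as [Hle|Hpos]. { specialize (HM x Hx). lra. }
  exfalso.
  assert (HMx' : 0 < Mx < 1).
  { destruct HMx as [[A|A] [B|B]]; subst; try lra. }
  assert (Hn : forall n, 0 < Mx / 2 ^ n < 1 /\ phi (Mx / 2 ^ n) = phi Mx).
  { induction n.
    - simpl. replace (Mx / 1) with Mx by field. split; auto.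
    - destruct IHn as [Hy Hp]. set (y := Mx / 2 ^ n) in *.
      assert (Ey : Mx / 2 ^ S n = y / 2). { unfold y. simpl. field. apply pow_nonzero. lra. }
      rewrite Ey. split. lra.
      pose proof (Hd y Hy). pose proof (HM (y / 2) ltac:(lra)). pose proof (HM ((y + 1) / 2) ltac:(lra)). lra. }
  destruct (Hc 0 ltac:(lra) (phi Mx) Hpos) as [alp [Halp Hcl]].
  destruct (archimed (Mx / alp)) as [Ha _].
  set (n := Z.to_nat (up (Mx / alp))).
  assert (Hpos2 : 0 < Mx / alp) by (unfold Rdiv; apply Rmult_lt_0_compat; [lra|apply Rinv_0_lt_compat; lra]).
  assert (Hn2 : Mx / alp < 2 ^ n).
  { apply Rlt_le_trans with (IZR (up (Mx / alp))); auto.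
    apply Rle_trans with (INR n); [|apply pow2_ge]. unfold n. rewrite INR_IZR_INZ. rewrite Z2Nat.id. lra.
    apply le_IZR. lra. }
  destruct (Hn n) as [Hy Hp].
  assert (Hsmall : Mx / 2 ^ n < alp).
  { assert (0 < 2 ^ n) by (apply pow_lt; lra).
    apply Rmult_lt_reg_r with (2 ^ n); auto. unfold Rdiv. rewrite Rmult_assoc, Rinv_l by lra.
    apply Rmult_lt_reg_r with (/ alp). apply Rinv_0_lt_compat; lra.
    rewrite Rmult_1_r. replace (alp * 2 ^ n * / alp) with (2 ^ n) by (field; lra). exact Hn2. }
  specialize (Hcl (Mx / 2 ^ n)). simpl in Hcl. unfold Rdist in Hcl.
  rewrite Hp, P0 in Hcl. rewrite !Rminus_0_r in Hcl.
  assert (HH : Rabs (phi Mx) < phi Mx).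
  { apply Hcl. split. { split. exact I. apply Rlt_not_eq. lra. } rewrite Rabs_right; lra. }
  rewrite Rabs_right in HH by lra. lra.
Qed.

Lemma gf_zero x : 0 < x < 1 -> gf x = 0.
Proof.
  intros Hx.
  assert (Dup : forall y, 0 < y < 1 -> Gf (y / 2) + Gf ((y + 1) / 2) = 2 * Gf y).
  { intros y Hy. rewrite !Gf_in by lra. apply gf_dup; auto. }
  assert (A : Gf x <= 0).
  { apply (dup_max Gf); auto; try lra. apply Gf_cont. apply Gf_out; lra. apply Gf_out; lra. }
  assert (B : - Gf x <= 0).
  { apply (dup_max (fun y => - Gf y)); try lra.
    - intros c Hc. exact (continuity_pt_opp Gf c (Gf_cont c Hc)).
    - rewrite Gf_out; lra.
    - rewrite Gf_out; lra.
    - intros y Hy. cbv beta. pose proof (Dup y Hy). lra. }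
  rewrite <- Gf_in by auto. lra.
Qed.

Lemma reflection x : 0 < x < 1 -> H x - H (1 - x) = / x - / (1 - x) - PI * cot (PI * x).
Proof. intros Hx. pose proof (gf_zero x Hx) as G. unfold gf, Tf in G. lra. Qed.
Lemma nat_prime_div q g : prime (Z.of_nat q) -> Nat.divide g q -> g = 1%nat \/ g = q.
Proof.
  intros Hp [k Hk].
  assert (Hz : (Z.of_nat g | Z.of_nat q)%Z). { exists (Z.of_nat k). rewrite Hk, Nat2Z.inj_mul. auto. }
  destruct (prime_divisors _ Hp _ Hz) as [E|[E|[E|E]]]; lia.
Qed.

Lemma prime_ge2 q : prime (Z.of_nat q) -> (2 <= q)%nat.
Proof. intros Hp. pose proof (prime_ge_2 _ Hp). lia. Qed.

Lemma coprime_prime q b : prime (Z.of_nat q) -> ~ Nat.divide q b -> Nat.gcd b q = 1%nat.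
Proof.
  intros Hp Hn. destruct (nat_prime_div q (Nat.gcd b q) Hp (Nat.gcd_divide_r b q)) as [E|E]; auto.
  exfalso; apply Hn. rewrite <- E. apply Nat.gcd_divide_l.
Qed.

Lemma coprime_mul b x y : Nat.gcd b x = 1%nat -> Nat.gcd b y = 1%nat -> Nat.gcd b (x * y) = 1%nat.
Proof.
  intros Hx Hy. set (g := Nat.gcd b (x * y)).
  assert (Hgb : Nat.divide g b) by apply Nat.gcd_divide_l.
  assert (Hgxy : Nat.divide g (x * y)) by apply Nat.gcd_divide_r.
  assert (Hgx : Nat.gcd g x = 1%nat).
  { apply Nat.divide_1_r. rewrite <- Hx. apply Nat.gcd_greatest.
    - eapply Nat.divide_trans; [apply Nat.gcd_divide_l|exact Hgb].
    - apply Nat.gcd_divide_r. }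
  assert (Hgy : Nat.divide g y) by (eapply Nat.gauss; eauto).
  apply Nat.divide_1_r. rewrite <- Hy. apply Nat.gcd_greatest; auto.
Qed.

Lemma coprime_pow q b m : prime (Z.of_nat q) -> ~ Nat.divide q b -> Nat.gcd b (q ^ m) = 1%nat.
Proof.
  intros Hp Hn. induction m. simpl. apply Nat.divide_1_r. apply Nat.gcd_divide_r.
  simpl. apply coprime_mul; auto. apply coprime_prime; auto.
Qed.

Lemma divide_dec q b : (0 < q)%nat -> {Nat.divide q b} + {~ Nat.divide q b}.
Proof.
  intros Hq. destruct (Nat.eq_dec (b mod q) 0) as [E|E].
  - left. apply Nat.Lcm0.mod_divide; auto; lia.
  - right. intros D. apply E. apply Nat.Lcm0.mod_divide; auto; lia.
Qed.

Lemma factor_q q a : (2 <= q)%nat -> (1 <= a)%nat -> exists t b, a = (q ^ t * b)%nat /\ ~ Nat.divide q b.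
Proof.
  intros Hq. induction a as [a IH] using (well_founded_induction lt_wf). intros Ha.
  destruct (divide_dec q a ltac:(lia)) as [[k Hk]|Hn].
  - assert (Hk1 : (1 <= k)%nat) by (destruct k; lia).
    assert (Hlt : (k < a)%nat) by nia.
    destruct (IH k Hlt Hk1) as [t [b [E Hb]]].
    exists (S t), b. split; auto. rewrite Hk, E. simpl. ring.
  - exists 0%nat, a. simpl. split; [lia|auto].
Qed.

Lemma pow_pos_nat q t : (1 <= q)%nat -> (1 <= q ^ t)%nat.
Proof. intros Hq. induction t; simpl; nia. Qed.
Definition units_small (Q : nat) : list nat :=
  filter (fun a => Nat.eqb (Nat.gcd a Q) 1 && Nat.ltb (2 * a) Q) (seq 1 Q).

Lemma len_filter_split {A} (P g h : A -> bool) (l : list A) :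
  (forall a, g a = true -> h a = true -> False) ->
  (length (filter (fun a => P a && g a) l) + length (filter (fun a => P a && h a) l) <= length (filter P l))%nat.
Proof.
  intros Hd. induction l as [|a l IH]; simpl; auto.
  destruct (P a) eqn:Pa; destruct (g a) eqn:Ga; destruct (h a) eqn:Ha; simpl;
    try (exfalso; eapply Hd; eauto; fail); lia.
Qed.

Lemma units_small_count Q : (2 * length (units_small Q) <= totient Q)%nat.
Proof.
  unfold units_small, totient.
  set (P := fun a => Nat.eqb (Nat.gcd a Q) 1).
  set (big := fun a => Nat.ltb Q (2 * a)).
  pose proof (len_filter_split P (fun a => Nat.ltb (2 * a) Q) big (seq 1 Q)) as Hs.
  assert (Hd : forall a, Nat.ltb (2 * a) Q = true -> big a = true -> False).
  { intros a A B. unfold big in B. apply Nat.ltb_lt in A. apply Nat.ltb_lt in B. lia. }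
  specialize (Hs Hd).
  assert (Hl : (length (filter (fun a => P a && Nat.ltb (2 * a) Q) (seq 1 Q)) <=
                length (filter (fun a => P a && big a) (seq 1 Q)))%nat).
  { rewrite <- (map_length (fun a => Q - a)%nat).
    apply NoDup_incl_length.
    - apply NoDup_map_NoDup_ForallPairs.
      + intros x y Hx Hy E. apply filter_In in Hx. apply filter_In in Hy.
        destruct Hx as [Hx _]; destruct Hy as [Hy _]. apply in_seq in Hx; apply in_seq in Hy. lia.
      + apply NoDup_filter, seq_NoDup.
    - intros b Hb. apply in_map_iff in Hb. destruct Hb as [a [<- Ha]].
      apply filter_In in Ha. destruct Ha as [Ha Hc]. apply in_seq in Ha.
      apply andb_true_iff in Hc. destruct Hc as [Hc1 Hc2]. apply Nat.ltb_lt in Hc2.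
      apply filter_In. split.
      + apply in_seq. lia.
      + apply andb_true_iff. split.
        * unfold P in *. apply Nat.eqb_eq in Hc1. apply Nat.eqb_eq.
          rewrite <- Nat.gcd_sub_diag_r by lia. replace (Q - (Q - a))%nat with a by lia.
          rewrite Nat.gcd_comm, Nat.gcd_sub_diag_r by lia. auto.
        * unfold big. cbv beta. apply Nat.ltb_lt. clear - Ha Hc2. lia. }
  unfold P, big in *. lia.
Qed.
Lemma Km1 : Kalg (-1). Proof. apply Kopp, K1. Qed.

Lemma spn_sub Y a b : spn Y a -> spn Y b -> spn Y (a - b).
Proof. intros A B. replace (a - b) with (a + (-1) * b) by ring. apply sp_add; auto. apply sp_scal; auto. apply Km1. Qed.
Lemma spn_K Y c : In 1 Y -> Kalg c -> spn Y c.
Proof. intros I Kc. replace c with (c * 1) by ring. apply sp_scal; auto. apply sp_in; auto. Qed.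
Lemma spn_div Y c x : Kalg c -> c <> 0 -> spn Y (c * x) -> spn Y x.
Proof. intros Kc Hc S. replace x with (/ c * (c * x)) by (field; auto). apply sp_scal; auto. apply Kinv; auto. Qed.
Lemma spn_sum Y N f : (forall j, (j < N)%nat -> spn Y (f j)) -> spn Y (sumR_upto N f).
Proof. induction N; intros Hf; simpl. apply sp_zero. apply sp_add. apply IHN; intros; apply Hf; lia. apply Hf; lia. Qed.
Lemma spn_eq Y a b : a = b -> spn Y a -> spn Y b.
Proof. intros ->; auto. Qed.

Definition Y0 : list R := 1 :: PI :: ln 2 :: nil.

Lemma Kfrac b Q : Kalg (INR b / INR Q). Proof. apply Kdiv; apply KINR. Qed.

Lemma Ksin k N : (0 < N)%nat -> Kalg (sin (PI * INR k / INR N)).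
Proof.
  intros HN. assert (HNr : 0 < INR N) by (apply lt_0_INR; auto).
  assert (E : sin (PI * INR k / INR N) = cos (PI * INR k / INR N - PI / 2)).
  { rewrite cos_minus, cos_PI2, sin_PI2. ring. }
  rewrite E. destruct (le_lt_dec N (2 * k)) as [Hle|Hlt].
  - replace (PI * INR k / INR N - PI / 2) with (PI * INR (2 * k - N) / INR (2 * N)).
    apply AlgM.Kalg_cos; lia.
    rewrite minus_INR by lia. rewrite !mult_INR. replace (INR 2) with 2 by (simpl; ring). field. lra.
  - replace (PI * INR k / INR N - PI / 2) with (- (PI * INR (N - 2 * k) / INR (2 * N))).
    rewrite cos_neg. apply AlgM.Kalg_cos; lia.
    rewrite minus_INR by lia. rewrite !mult_INR. replace (INR 2) with 2 by (simpl; ring). field. lra.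
Qed.

Lemma Kcot b Q : (0 < Q)%nat -> Kalg (cot (PI * (INR b / INR Q))).
Proof.
  intros HQ. unfold cot. replace (PI * (INR b / INR Q)) with (PI * INR b / INR Q) by (unfold Rdiv; ring).
  apply Kdiv. apply AlgM.Kalg_cos; auto. apply Ksin; auto.
Qed.

Lemma odd_span Y b Q : In 1 Y -> In PI Y -> (0 < b < Q)%nat ->
  spn Y (H (INR b / INR Q) - H (1 - INR b / INR Q)).
Proof.
  intros I1 IP Hb. assert (0 < INR b) by (apply lt_0_INR; lia).
  assert (INR b < INR Q) by (apply lt_INR; lia).
  assert (Hx : 0 < INR b / INR Q < 1).
  { split. unfold Rdiv; apply Rmult_lt_0_compat; [lra|apply Rinv_0_lt_compat; lra].
    apply Rmult_lt_reg_r with (INR Q); [lra|]. unfold Rdiv. rewrite Rmult_assoc, Rinv_l by lra. lra. }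
  rewrite reflection by auto.
  replace (/ (INR b / INR Q) - / (1 - INR b / INR Q) - PI * cot (PI * (INR b / INR Q)))
    with ((/ (INR b / INR Q) - / (1 - INR b / INR Q)) * 1 + (- cot (PI * (INR b / INR Q))) * PI) by ring.
  apply sp_add; apply sp_scal; try (apply sp_in; auto).
  - apply Kminus; apply Kinv; [apply Kfrac|]. apply Kminus; [apply K1|apply Kfrac].
  - apply Kopp. apply Kcot. lia.
Qed.

Definition Ev (Q a : nat) : R := H (INR a / INR Q) + H (INR (Q - a) / INR Q).

Definition Yq (q m : nat) : list R :=
  match m with O => nil | _ => map (Ev (q ^ m)) (units_small (q ^ m)) end.

Definition Yloc (q m : nat) : list R := Y0 ++ Yq q m.

Lemma In1 q m : In 1 (Yloc q m). Proof. unfold Yloc, Y0. simpl; auto. Qed.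
Lemma InPI q m : In PI (Yloc q m). Proof. unfold Yloc, Y0. simpl; auto. Qed.
Lemma Inln2 q m : In (ln 2) (Yloc q m). Proof. unfold Yloc, Y0. simpl; auto. Qed.

Lemma odd_prime q : prime (Z.of_nat q) -> q <> 2%nat -> Nat.odd q = true.
Proof.
  intros Hp H2. destruct (Nat.even q) eqn:E.
  - exfalso. apply Nat.even_spec in E. destruct E as [k Hk].
    destruct (nat_prime_div q 2 Hp) as [A|A]; [exists k; lia|lia|lia].
  - rewrite <- Nat.negb_even, E. auto.
Qed.

Lemma odd_pow q m : Nat.odd q = true -> Nat.odd (q ^ m) = true.
Proof. intros Ho. induction m. auto. simpl. rewrite Nat.odd_mul, Ho, IHm. auto. Qed.

Lemma odd_half Q : Nat.odd Q = true -> exists d, Q = (2 * d + 1)%nat.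
Proof. intros Ho. apply Nat.odd_spec in Ho. destruct Ho as [d Hd]. exists d; lia. Qed.

Lemma unit_span q m b : prime (Z.of_nat q) -> q <> 2%nat -> (1 <= m)%nat ->
  (1 <= b < q ^ m)%nat -> ~ Nat.divide q b -> spn (Yloc q m) (H (INR b / INR (q ^ m))).
Proof.
  intros Hp H2 Hm Hb Hn. set (Q := (q ^ m)%nat) in *.
  destruct (odd_half Q (odd_pow q m (odd_prime q Hp H2))) as [d Hd].
  assert (Hg : Nat.gcd b Q = 1%nat) by (apply coprime_pow; auto).
  assert (HQr : 0 < INR Q) by (apply lt_0_INR; lia).
  assert (E1 : INR (Q - b) / INR Q = 1 - INR b / INR Q) by (rewrite minus_INR by lia; field; lra).
  assert (Hev : spn (Yloc q m) (Ev Q b)).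
  { apply sp_in. unfold Yloc. apply in_or_app. right.
    destruct m as [|m']; [lia|]. unfold Yq. fold Q.
    destruct (Nat.ltb_spec (2 * b) Q) as [Hs|Hs].
    - apply in_map. apply filter_In. split. apply in_seq; lia.
      apply andb_true_iff; split; [apply Nat.eqb_eq; auto|apply Nat.ltb_lt; auto].
    - replace (Ev Q b) with (Ev Q (Q - b)).
      2:{ unfold Ev. replace (Q - (Q - b))%nat with b by lia. ring. }
      apply in_map. apply filter_In. split. apply in_seq; lia.
      apply andb_true_iff; split; [apply Nat.eqb_eq|apply Nat.ltb_lt; lia].
      rewrite <- (Nat.gcd_sub_diag_r (Q - b) Q) by lia. replace (Q - (Q - b))%nat with b by lia.
      rewrite Nat.gcd_comm, Nat.gcd_sub_diag_r by lia. exact Hg. }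
  pose proof (odd_span (Yloc q m) b Q (In1 q m) (InPI q m) ltac:(lia)) as Ho.
  unfold Ev in Hev. rewrite E1 in Hev.
  apply spn_eq with (/ 2 * (H (INR b / INR Q) + H (1 - INR b / INR Q)) + / 2 * (H (INR b / INR Q) - H (1 - INR b / INR Q))).
  field. apply sp_add; apply sp_scal; auto; apply Kinv; apply KIZR.
Qed.
Lemma sum_const N c : sumR_upto N (fun _ => c) = INR N * c.
Proof. induction N. simpl; ring. rewrite sum_S, IHN, S_INR. ring. Qed.

Lemma KGG s N : Kalg s -> Kalg (GG s N).
Proof. intros Ks. unfold GG. apply K_sum. intros i. apply Kinv. apply Kplus; auto. apply Kplus. apply KINR. apply K1. Qed.

Lemma down_span q m : prime (Z.of_nat q) -> q <> 2%nat -> (1 <= m)%nat ->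
  forall d, (d + 1 <= m)%nat -> forall b, (1 <= b < q ^ (m - d))%nat -> ~ Nat.divide q b ->
  spn (Yloc q m) (H (INR b / INR (q ^ (m - d))) - INR d * ln (INR q)).
Proof.
  intros Hp H2 Hm. pose proof (prime_ge2 q Hp) as Hq2.
  induction d as [|d IH]; intros Hd b Hb Hn.
  - replace (m - 0)%nat with m by lia. apply spn_eq with (H (INR b / INR (q ^ m))).
    simpl; ring. apply unit_span; auto. replace (m - 0)%nat with m in Hb by lia. auto.
  - set (m' := (m - S d)%nat) in *.
    assert (Hm' : (m - d = S m')%nat) by (unfold m'; lia).
    assert (Hqm : (1 <= q ^ m')%nat) by (apply pow_pos_nat; lia).
    assert (HQr : 0 < INR (q ^ m')) by (apply lt_0_INR; lia).
    assert (Hqr : 2 <= INR q) by (replace 2 with (INR 2) by (simpl; ring); apply le_INR; auto).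
    set (s := INR b / INR (q ^ m')).
    assert (Hs : 0 <= s) by (unfold s, Rdiv; apply Rmult_le_pos; [apply pos_INR|apply Rlt_le, Rinv_0_lt_compat; auto]).
    pose proof (dist_rel q s ltac:(lia) Hs) as D.
    assert (Hj : forall j, (j < q)%nat ->
              spn (Yloc q m) (H ((s + INR j) / INR q) - INR d * ln (INR q))).
    { intros j Hjq.
      assert (E : (s + INR j) / INR q = INR (b + j * q ^ m') / INR (q ^ (m - d))).
      { rewrite Hm'. unfold s. rewrite plus_INR, mult_INR, Nat.pow_succ_r', mult_INR. field. lra. }
      rewrite E. apply IH. lia.
      - rewrite Hm'. simpl. nia.
      - intros Hdiv. apply Hn.
        assert (Hqd : Nat.divide q (j * q ^ m')).
        { apply Nat.divide_mul_r. exists (q ^ (m' - 1))%nat. rewrite Nat.mul_comm, <- Nat.pow_succ_r'. f_equal. unfold m'. lia. }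
        apply (Nat.divide_add_cancel_r q (j * q ^ m') b Hqd).
        rewrite Nat.add_comm. auto. }
    pose proof (spn_sum _ q _ Hj) as S1.
    rewrite sum_minus, sum_const, D in S1.
    assert (S2 : spn (Yloc q m) (INR q * GG s (q - 1))).
    { apply spn_K. apply In1. apply Kmult. apply KINR. apply KGG. apply Kfrac. }
    apply spn_div with (INR q). apply KINR. lra.
    apply spn_eq with (INR q * H s + INR q * GG s (q - 1) - INR q * ln (INR q) - INR q * (INR d * ln (INR q))
                        - INR q * GG s (q - 1)).
    { rewrite S_INR. unfold s. ring. }
    apply spn_sub; auto.
Qed.

Lemma lnq_span q m : prime (Z.of_nat q) -> q <> 2%nat -> (1 <= m)%nat -> spn (Yloc q m) (ln (INR q)).
Proof.
  intros Hp H2 Hm. pose proof (prime_ge2 q Hp) as Hq2.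
  assert (Hqr : 2 <= INR q) by (replace 2 with (INR 2) by (simpl; ring); apply le_INR; auto).
  pose proof (dist_rel q 0 ltac:(lia) ltac:(lra)) as D.
  replace q with (S (q - 1)) in D at 1 by lia. rewrite sum_shift in D.
  replace ((0 + INR 0) / INR q) with 0 in D by (simpl; field; lra). rewrite H0 in D.
  assert (Hj : forall j, (j < q - 1)%nat ->
     spn (Yloc q m) (H ((0 + INR (S j)) / INR q) - INR (m - 1) * ln (INR q))).
  { intros j Hjq.
    replace ((0 + INR (S j)) / INR q) with (INR (S j) / INR (q ^ (m - (m - 1)))).
    2:{ replace (m - (m - 1))%nat with 1%nat by lia. simpl. rewrite Nat.mul_1_r. field. lra. }
    apply down_span; auto. lia. replace (m - (m - 1))%nat with 1%nat by lia. simpl; lia.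
    intros Hdiv. apply Nat.divide_pos_le in Hdiv; lia. }
  pose proof (spn_sum _ (q - 1) _ Hj) as S1.
  rewrite sum_minus, sum_const in S1.
  set (c := INR q + INR (q - 1) * INR (m - 1)).
  assert (Hc : 0 < c). { unfold c. pose proof (pos_INR (q - 1)). pose proof (pos_INR (m - 1)). nra. }
  apply spn_div with (- c). apply Kopp. unfold c. apply Kplus. apply KINR. apply Kmult; apply KINR. lra.
  apply spn_eq with (sumR_upto (q - 1) (fun j => H ((0 + INR (S j)) / INR q)) - INR (q - 1) * (INR (m - 1) * ln (INR q))
                     - INR q * GG 0 (q - 1)).
  { assert (E : sumR_upto (q - 1) (fun j => H ((0 + INR (S j)) / INR q)) = INR q * GG 0 (q - 1) - INR q * ln (INR q)).
    { rewrite Rplus_0_l in D. rewrite D. ring. }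
    rewrite E. unfold c. ring. }
  apply spn_sub; auto. apply spn_K. apply In1. apply Kmult. apply KINR. apply KGG. apply K0.
Qed.

Lemma any_span q m a : prime (Z.of_nat q) -> q <> 2%nat -> (a <= q ^ m)%nat ->
  spn (Yloc q m) (H (INR a / INR (q ^ m))).
Proof.
  intros Hp H2 Ha. pose proof (prime_ge2 q Hp) as Hq2.
  assert (HQ : (1 <= q ^ m)%nat) by (apply pow_pos_nat; lia).
  assert (HQr : 0 < INR (q ^ m)) by (apply lt_0_INR; lia).
  destruct (Nat.eq_dec a 0) as [->|Ha0].
  { replace (INR 0 / INR (q ^ m)) with 0 by (simpl; field; lra). rewrite H0. apply sp_zero. }
  destruct (Nat.eq_dec a (q ^ m)) as [->|HaQ].
  { replace (INR (q ^ m) / INR (q ^ m)) with 1 by (field; lra). rewrite H1. apply sp_in, In1. }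
  destruct (factor_q q a Hq2 ltac:(lia)) as [t [b [Eab Hb]]].
  assert (Hb1 : (1 <= b)%nat) by (destruct b; [rewrite Nat.mul_0_r in Eab; lia|lia]).
  assert (Ht : (t < m)%nat).
  { destruct (Nat.lt_ge_cases t m) as [|Hge]; auto. exfalso.
    assert (q ^ m <= q ^ t)%nat by (apply Nat.pow_le_mono_r; lia). nia. }
  assert (Em : (q ^ m = q ^ t * q ^ (m - t))%nat) by (rewrite <- Nat.pow_add_r; f_equal; lia).
  assert (Hqt : (1 <= q ^ t)%nat) by (apply pow_pos_nat; lia).
  assert (Hqt' : 0 < INR (q ^ t)) by (apply lt_0_INR; lia).
  assert (Hqmt : 0 < INR (q ^ (m - t))) by (apply lt_0_INR; apply pow_pos_nat; lia).
  replace (INR a / INR (q ^ m)) with (INR b / INR (q ^ (m - t))).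
  2:{ rewrite Eab, Em, !mult_INR. field. split; lra. }
  pose proof (down_span q m Hp H2 ltac:(lia) t ltac:(lia) b) as Dn.
  assert (Hbl : (b < q ^ (m - t))%nat) by nia.
  specialize (Dn ltac:(lia) Hb).
  apply spn_eq with ((H (INR b / INR (q ^ (m - t))) - INR t * ln (INR q)) + INR t * ln (INR q)). ring.
  apply sp_add; auto. apply sp_scal. apply KINR. apply lnq_span; auto. lia.
Qed.

Lemma level2_span q m a : prime (Z.of_nat q) -> q <> 2%nat -> (1 <= a <= 2 * q ^ m - 1)%nat ->
  spn (Yloc q m) (H (INR a / INR (2 ^ 1 * q ^ m))).
Proof.
  intros Hp H2 Ha. pose proof (prime_ge2 q Hp) as Hq2.
  set (Q := (q ^ m)%nat) in *.
  assert (HQ : (1 <= Q)%nat) by (apply pow_pos_nat; lia).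
  assert (HQr : 0 < INR Q) by (apply lt_0_INR; lia).
  destruct (odd_half Q (odd_pow q m (odd_prime q Hp H2))) as [d Hd].
  replace (INR (2 ^ 1 * Q)) with (2 * INR Q) by (rewrite mult_INR; simpl; ring).
  assert (HQd : INR Q = 2 * INR d + 1) by (rewrite Hd, plus_INR, mult_INR; simpl; ring).
  destruct (Nat.Even_or_Odd a) as [[c Hc]|[c Hc]].
  - replace (INR a / (2 * INR Q)) with (INR c / INR Q) by (rewrite Hc, mult_INR; simpl; field; lra).
    apply any_span; auto. lia.
  - destruct (Nat.lt_ge_cases a Q) as [HaQ|HaQ].
    + set (s := INR a / INR Q).
      assert (Hs : 0 <= s) by (unfold s, Rdiv; apply Rmult_le_pos; [apply pos_INR|apply Rlt_le, Rinv_0_lt_compat; auto]).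
      pose proof (dist2 s Hs) as D.
      assert (E1 : s / 2 = INR a / (2 * INR Q)) by (unfold s; field; lra).
      assert (E2 : (s + 1) / 2 = INR (c + d + 1) / INR Q).
      { unfold s. rewrite Hc. rewrite !plus_INR, mult_INR, HQd. simpl. field. pose proof (pos_INR d). lra. }
      rewrite E1, E2 in D.
      apply spn_eq with (2 * H s + 2 / (s + 1) - 2 * ln 2 - H (INR (c + d + 1) / INR Q)). lra.
      apply spn_sub. apply spn_sub. apply sp_add.
      * apply sp_scal. apply KIZR. apply any_span; auto. lia.
      * apply spn_K. apply In1. apply Kdiv. apply KIZR. apply Kplus. apply Kfrac. apply K1.
      * apply sp_scal. apply KIZR. apply sp_in, Inln2.
      * apply any_span; auto. lia.
    + set (s := INR (2 * (c - d)) / INR Q).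
      assert (Hs : 0 <= s) by (unfold s, Rdiv; apply Rmult_le_pos; [apply pos_INR|apply Rlt_le, Rinv_0_lt_compat; auto]).
      pose proof (dist2 s Hs) as D.
      assert (E1 : s / 2 = INR (c - d) / INR Q) by (unfold s; rewrite mult_INR; simpl; field; lra).
      assert (E2 : (s + 1) / 2 = INR a / (2 * INR Q)).
      { unfold s. rewrite mult_INR, minus_INR by lia. rewrite HQd.
        rewrite Hc, plus_INR, !mult_INR. simpl. field. pose proof (pos_INR d). lra. }
      rewrite E1, E2 in D.
      apply spn_eq with (2 * H s + 2 / (s + 1) - 2 * ln 2 - H (INR (c - d) / INR Q)). lra.
      apply spn_sub. apply spn_sub. apply sp_add.
      * apply sp_scal. apply KIZR. apply any_span; auto. lia.
      * apply spn_K. apply In1. apply Kdiv. apply KIZR. apply Kplus. apply Kfrac. apply K1.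
      * apply sp_scal. apply KIZR. apply sp_in, Inln2.
      * apply any_span; auto. lia.
Qed.
Fixpoint Yall (q m : nat -> nat) (n : nat) : list R :=
  match n with O => nil | S n' => Yall q m n' ++ Yq (q n') (m n') end.

Lemma Yall_in q m n i y : (i < n)%nat -> In y (Yq (q i) (m i)) -> In y (Yall q m n).
Proof.
  induction n; intros Hi Hy; [lia|]. simpl. apply in_or_app.
  destruct (Nat.eq_dec i n) as [->|Hne]; [right; auto|left; apply IHn; auto; lia].
Qed.

Lemma Yq_len q m : INR (length (Yq q m)) <= INR (totient (q ^ m)) / 2.
Proof.
  destruct m as [|m'].
  - simpl. pose proof (pos_INR (totient 1)). lra.
  - unfold Yq. rewrite map_length. pose proof (units_small_count (q ^ S m')) as C.
    apply le_INR in C. rewrite mult_INR in C. replace (INR 2) with 2 in C by (simpl; ring). lra.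
Qed.

Lemma Yall_len q m n : INR (length (Yall q m n)) <= sumR_upto n (fun i => INR (totient (q i ^ m i)) / 2).
Proof.
  induction n. simpl. lra.
  simpl Yall. rewrite app_length, plus_INR, sum_S. pose proof (Yq_len (q n) (m n)). lra.
Qed.

Theorem theorem3p10 (n : nat) (q m e : nat -> nat)
  (hq_prime : forall i, (i < n)%nat -> prime (Z.of_nat (q i)))
  (hq_odd : forall i, (i < n)%nat -> q i <> 2%nat)
  (hq_ne3 : forall i, (i < n)%nat -> q i <> 3%nat)
  (hq_inj : forall i j, (i < n)%nat -> (j < n)%nat -> q i = q j -> i = j)
  (he : forall i, (i < n)%nat -> (e i <= 1)%nat)
  (xs : list R)
  (hnodup : NoDup xs)
  (hmem : forall x, In x xs ->
     x = H 1 \/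
     exists i a, (i < n)%nat /\ (1 <= a)%nat /\ (a <= 2 ^ e i * q i ^ m i - 1)%nat /\
                 x = H (INR a / INR (2 ^ e i * q i ^ m i)))
  (hind : alg_lin_indep xs) :
  INR (length xs) <= sumR_upto n (fun i => INR (totient (q i ^ m i)) / 2) + 3.
Proof.
  set (Y := Y0 ++ Yall q m n).
  assert (Hsp : forall x, In x xs -> spn Y x).
  { intros x Hx. destruct (hmem x Hx) as [->|[i [a [Hi [Ha1 [Ha2 ->]]]]]].
    - rewrite H1. apply sp_in. unfold Y, Y0. simpl. auto.
    - apply spn_mono with (Yloc (q i) (m i)).
      { intros y Hy. unfold Yloc in Hy. unfold Y. apply in_app_or in Hy. apply in_or_app.
        destruct Hy as [Hy|Hy]; [left; auto|right; apply Yall_in with i; auto]. }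
      pose proof (he i Hi) as Hei.
      destruct (e i) as [|[|e']] eqn:Ee; [| |lia].
      + replace (2 ^ 0 * q i ^ m i)%nat with (q i ^ m i)%nat in * by (simpl; lia).
        apply any_span; auto. lia.
      + apply level2_span; auto; try (simpl in Ha2; lia). }
  pose proof (span_bound Y xs Hsp hind) as Hb.
  apply le_INR in Hb. unfold Y in Hb. rewrite app_length, plus_INR in Hb.
  pose proof (Yall_len q m n). simpl in Hb. lra.
Qed.
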